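(* Let $k\ge 2$ be an integer that is not a perfect square. If either (R1) $k$ is prime, or (R2) $k=\alpha^{n}$ with $\alpha$ prime and $n$ odd, then $R_k=\{0,\,k-1\}$ (so $\upsilon=2$), i.e. every solution $(t,\xi)$ of $T_\xi=kT_t$ satisfies $\xi\equiv 0$ or $\xi\equiv k-1 \pmod k$, and both remainders occur.
   Context: For an integer $m\ge 0$, $T_m=m(m+1)/2$ denotes the $m$-th triangular number. For a non-square integer $k\ge 2$, consider the equation $T_\xi=k\,T_t$ in nonnegative integers $t,\xi$. Let $R_k=\{\xi \bmod k : \exists\, t\ge 0 \text{ with } T_\xi=kT_t\}$, the set of least nonnegative remainders modulo $k$ of all $\xi$ occurring in solutions $(t,\xi)$, and $\upsilon=|R_k|$. *)

(* Defs.v *)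
From mathcomp Require Import all_boot.
Set Implicit Arguments. Unset Strict Implicit. Unset Printing Implicit Defensive.

Definition tri (m : nat) : nat := (m * m.+1) %/ 2.

Definition in_Rk (k r : nat) : Prop :=
  exists t xi : nat, tri xi = k * tri t /\ xi %% k = r.

Definition is_square (k : nat) : Prop := exists a : nat, k = a * a.

(* Main.v *)
Require Import Defs.
From mathcomp Require Import all_boot.
From Stdlib Require Import Reals Lra Psatz Lia ZArith.
From mathcomp Require Import all_boot.
From mathcomp Require Import zify.

Section RealPart.
Local Open Scope R_scope.

Lemma core_R (k N Q P s : R) : s*s = k -> 0<=s -> 1<=k -> 1<=N -> 1 <= Q -> Q <= N -> 0 <= P ->
  -1 < N*Q*s - N*P < 1 ->
  P*P - k*Q*Q < 2*k+1 /\ k*Q*Q - P*P < 2*k+1 /\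
  (1 <= P*P - k*Q*Q \/ 1 <= k*Q*Q - P*P -> N < P + k*Q).
Proof.
intros Hs Hs0 Hk HN HQ1 HQN HP [H1 H2].
set (E := P - Q*s).
assert (HE1 : N*E < 1) by (unfold E; lra).
assert (HE2 : -1 < N*E) by (unfold E; lra).
assert (Hid : P*P - k*Q*Q = E*(E + 2*Q*s)) by (unfold E; rewrite -Hs; ring).
assert (s1 : 1 <= s) by nra.
assert (sk : s <= k) by nra.
assert (Hq : 0 <= Q*s) by nra.
assert (HNE0 : 0 < (1 - N*E)*(1+N*E)) by (apply Rmult_lt_0_compat; lra).
assert (HNE : (N*E)*(N*E) < 1) by nra.
assert (HEb : 0 <= (N*N-1)*(E*E)) by (apply Rmult_le_pos; nra).
assert (HEa : E*E < 1) by nra.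
assert (Hq' : 0 < Q*s) by nra.
assert (HQE1 : N*(Q*s*E) < Q*s).
{ replace (N*(Q*s*E)) with ((Q*s)*(N*E)) by ring.
  assert ((Q*s)*(N*E) < (Q*s)*1) by (apply Rmult_lt_compat_l; lra). lra. }
assert (HQE2 : -(Q*s) < N*(Q*s*E)).
{ replace (N*(Q*s*E)) with ((Q*s)*(N*E)) by ring.
  assert ((Q*s)*(-1) < (Q*s)*(N*E)) by (apply Rmult_lt_compat_l; lra). lra. }
assert (HQs : Q*s <= N*s) by nra.
assert (HQE3 : Q*s*E < s) by nra.
assert (HQE4 : -s < Q*s*E) by nra.
split; [|split].
- rewrite Hid. nra.
- assert (k*Q*Q - P*P = - (E*(E + 2*Q*s))) by lra. nra.
- intros Hd.
  assert (HPQ : 0 <= P + Q*s) by nra.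
  assert (Habs : 1 <= Rabs E * (P + Q*s)).
  { assert (P + Q*s = E + 2*Q*s) by (unfold E; lra).
    destruct (Rle_dec 0 E).
    - assert (Rabs E = E) by (apply Rabs_right; lra). nra.
    - assert (Rabs E = - E) by (apply Rabs_left; lra). nra. }
  assert (HNa : N * Rabs E < 1).
  { destruct (Rle_dec 0 E).
    - assert (Rabs E = E) by (apply Rabs_right; lra). nra.
    - assert (Rabs E = - E) by (apply Rabs_left; lra). nra. }
  assert (0 <= Rabs E) by apply Rabs_pos.
  assert (N < P + Q*s) by nra.
  nra.
Qed.

Lemma floor_R (x : R) (b K : nat) : 0 <= x -> x*x = INR K ->
  (b*b <= K)%coq_nat -> (K < (b+1)*(b+1))%coq_nat -> INR b <= x < INR b + 1.
Proof.
intros Hx HK H1 H2.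
apply le_INR in H1. apply lt_INR in H2.
rewrite mult_INR in H1. rewrite mult_INR plus_INR in H2. simpl in H2.
assert (0 <= INR b) by apply pos_INR.
split; nra.
Qed.

End RealPart.


Lemma natR_lt (m n : nat) : Rlt (INR m) (INR n) -> m < n.
Proof. by move=> H; apply/ltP; apply: INR_lt. Qed.

Lemma natR_le (m n : nat) : m <= n -> Rle (INR m) (INR n).
Proof. by move/leP=> H; apply: le_INR. Qed.

Lemma INR_muln (m n : nat) : INR (m * n) = Rmult (INR m) (INR n).
Proof. exact: mult_INR. Qed.
Lemma INR_addn (m n : nat) : INR (m + n) = Rplus (INR m) (INR n).
Proof. exact: plus_INR. Qed.

Lemma sq_nonsq k p q : ~ is_square k -> 0 < q -> p*p != k*(q*q).
Proof.
move=> Hk q0; apply/eqP=> E; apply: Hk.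
have : (q ^ 2 %| p ^ 2) by rewrite -!mulnn E dvdn_mull.
rewrite dvdn_pexp2r // => /dvdnP [c Hc].
exists c; subst p.
have : (k * (q * q) == (c * c) * (q * q)) by apply/eqP; rewrite -E; nia.
by rewrite eqn_pmul2r ?muln_gt0 ?q0 // => /eqP.
Qed.


Lemma sqrt_facts (x : nat) : Nat.sqrt x * Nat.sqrt x <= x < (Nat.sqrt x).+1 * (Nat.sqrt x).+1.
Proof.
have [H1 H2] := Nat.sqrt_spec x (Nat.le_0_l x).
apply/andP; split; [apply/leP|apply/ltP]; lia.
Qed.

Lemma dirichlet k n : 1 <= k -> ~ is_square k -> exists p q,
  [/\ 0 < q, n.+1 < p + k*q, p*p <= k*(q*q) + 2*k, k*(q*q) <= p*p + 2*k & p*p != k*(q*q)].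
Proof.
move=> k1 nsq.
set N := n.+1.
pose a (q:nat) := Nat.sqrt (k*(q*q)).
pose b (q:nat) := Nat.sqrt (N*N*k*(q*q)).
have Hab q : N * a q <= b q < N * a q + N.
  have /andP[A1 A2] := sqrt_facts (k*(q*q)).
  have /andP[B1 B2] := sqrt_facts (N*N*k*(q*q)).
  rewrite -/(a q) in A1 A2; rewrite -/(b q) in B1 B2.
  apply/andP; split.
    rewrite leqNgt; apply/negP => C.
    have : (b q).+1 * (b q).+1 <= (N * a q) * (N * a q) by apply: leq_mul.
    have : N * a q * (N * a q) <= N*N*k*(q*q).
      by have := leq_mul (leqnn (N*N)) A1; lia.
    lia.
  rewrite ltnNge; apply/negP => C.
  have : (N * (a q).+1) * (N * (a q).+1) <= b q * b q by apply: leq_mul; lia.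
  have : N*N*k*(q*q) < (N * (a q).+1) * (N * (a q).+1).
      have : N*N*(k*(q*q)) < N*N*((a q).+1*(a q).+1) by rewrite ltn_pmul2l ?muln_gt0.
      lia.
  lia.
pose f (i : 'I_N.+1) : 'I_N := inord (b i - N * a i).
have [i [j [ij fij]]] : exists i j : 'I_N.+1, i < j /\ f i = f j.
  case E: [exists i : 'I_N.+1, exists j : 'I_N.+1, (i < j) && (f i == f j)].
    move/existsP: E => [i /existsP [j /andP [H1 /eqP H2]]]; by exists i, j.
  have inj : injective f.
    move=> i j Hf; apply/val_inj/eqP; rewrite /= eqn_leq.
    move/negbT: E => /existsPn E.
    have Ei := E i; have Ej := E j.
    move/existsPn: Ei => /(_ j); move/existsPn: Ej => /(_ i).
    rewrite Hf eqxx !andbT -!leqNgt => -> ->; done.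
  have := leq_card f inj; rewrite !card_ord; lia.
have bd (x : 'I_N.+1) : b x - N * a x < N by have := Hab x; lia.
have Hb : b i - N * a i = b j - N * a j.
  by move: fij; rewrite /f => /(congr1 val) /=; rewrite !inordK //; apply: bd.
have aij : a i <= a j.
  apply/leP; apply: Nat.sqrt_le_mono; apply/leP.
  by rewrite leq_mul2l leq_mul ?orbT // ltnW.
set q := j - i; set p := a j - a i.
have q0 : 0 < q by rewrite subn_gt0.
have qN : q <= N by have := ltn_ord j; lia.
have bji : b j = b i + N * p.
  have := leq_mul (leqnn N) aij; have := Hab i; have := Hab j; rewrite /p mulnBr; lia.
set s := sqrt (INR k).
have s0 : Rle 0 s by apply: sqrt_pos.
have ss : Rmult s s = INR k by apply: sqrt_sqrt; apply: pos_INR.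
have Xfl (x : 'I_N.+1) : Rle (INR (b x)) (INR N * INR x * s) /\ Rlt (INR N * INR x * s) (INR (b x) + 1).
  have /andP [B1 B2] := sqrt_facts (N*N*k*(x*x)).
  apply: (floor_R _ (b x) (N*N*k*(x*x))).
  - apply: Rmult_le_pos => //; apply: Rmult_le_pos; apply: pos_INR.
  - rewrite !INR_muln -ss; ring.
  - by apply/leP.
  - by apply/ltP; rewrite addn1.
have [Hi1 Hi2] := Xfl i; have [Hj1 Hj2] := Xfl j.
have Hq : INR q = Rminus (INR j) (INR i) by rewrite /q minus_INR //; apply/leP; apply: ltnW.
have Hbb : INR (b j) = Rplus (INR (b i)) (Rmult (INR N) (INR p)) by rewrite bji INR_addn INR_muln.
have k1R : Rle 1 (INR k) by apply: (natR_le 1 k).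
have N1R : Rle 1 (INR N) by apply: (natR_le 1 N).
have q1R : Rle 1 (INR q) by apply: (natR_le 1 q).
have qNR : Rle (INR q) (INR N) by apply: natR_le.
have p0R : Rle 0 (INR p) by apply: pos_INR.
have HH := @core_R _ _ _ _ _ ss s0 k1R N1R q1R qNR p0R.
have [C1 [C2 C3]] := HH ltac:(rewrite Hq; split; lra).
have nsq' := @sq_nonsq k p q nsq q0.
exists p, q; split => //.
- apply: natR_lt; rewrite INR_addn INR_muln.
  apply: C3.
  case: (ltngtP (p*p) (k*(q*q))) => H.
  + right. have H' : p*p + 1 <= k*(q*q) by rewrite addn1.
    have := @natR_le _ _ H'. rewrite !INR_addn !INR_muln /=. lra.
  + left. have H' : k*(q*q) + 1 <= p*p by rewrite addn1.
    have := @natR_le _ _ H'. rewrite !INR_addn !INR_muln /=. lra.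
  + by rewrite H eqxx in nsq'.
- have : p*p < k*(q*q)+2*k+1 by apply: natR_lt; rewrite !INR_addn !INR_muln /=; lra.
  by rewrite addn1 ltnS.
- have : k*(q*q) < p*p+2*k+1 by apply: natR_lt; rewrite !INR_addn !INR_muln /=; lra.
  by rewrite addn1 ltnS.
Qed.

Section ZPart.
Local Open Scope Z_scope.
Lemma zpell (k p1 q1 p2 q2 d m u w : Z) : d*d = m*m -> m <> 0 ->
  p1*p1 - k*q1*q1 = d -> p2*p2 - k*q2*q2 = d -> p1 = p2 + m*u -> q1 = q2 + m*w ->
  0 < q1 -> 0 < q2 -> (p1 <> p2 \/ q1 <> q2) ->
  exists x y, y <> 0 /\ x*x - k*y*y = 1.
Proof.
intros Hd Hm H1 H2 Hp Hq Hq1 Hq2 Hne.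
assert (He : exists e, d = e*m /\ e*e = 1).
{ assert (Hf : (d - m)*(d+m) = 0) by nia.
  apply Z.mul_eq_0 in Hf. destruct Hf as [Hf|Hf].
  - exists 1. split; lia.
  - exists (-1). split; lia. }
destruct He as [e [He Hee]].
set (x := e + u*p2 - k*w*q2). set (y := u*q2 - w*p2).
assert (HX : p1*p2 - k*q1*q2 = m*x).
{ have E1 : p1*p2 - k*q1*q2 = (p2*p2 - k*q2*q2) + m*(u*p2 - k*w*q2) by rewrite Hp Hq; ring.
  rewrite E1 H2 He /x; ring. }
assert (HY : p1*q2 - p2*q1 = m*y) by (rewrite /y Hp Hq; ring).
assert (Hid : (p1*p2 - k*q1*q2)*(p1*p2 - k*q1*q2) - k*(p1*q2 - p2*q1)*(p1*q2 - p2*q1)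
   = (p1*p1 - k*q1*q1)*(p2*p2 - k*q2*q2)) by ring.
rewrite HX HY H1 H2 Hd in Hid.
exists x, y. split.
- intro Hy0. rewrite Hy0 in HY.
  assert (HY' : p1*q2 = p2*q1) by lia.
  have E1 : d*(q2*q2) = (p1*q2)*(p1*q2) - k*q1*q1*q2*q2 by rewrite -H1; ring.
  have E2 : d*(q1*q1) = (p2*q1)*(p2*q1) - k*q2*q2*q1*q1 by rewrite -H2; ring.
  rewrite HY' in E1.
  assert (Hqq : d*(q2*q2 - q1*q1) = 0) by lia.
  apply Z.mul_eq_0 in Hqq. destruct Hqq as [Hqq|Hqq].
  + subst d. nia.
  + assert (q1 = q2) by nia. subst q1.
    assert (p1 = p2) by nia. lia.
- assert (Hmm : m*m*(x*x - k*y*y - 1) = 0) by nia.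
  apply Z.mul_eq_0 in Hmm. destruct Hmm as [Hmm|Hmm]; [nia|lia].
Qed.
End ZPart.

Lemma pell k : 2 <= k -> ~ is_square k -> exists x y, 0 < y /\ x*x = k*(y*y) + 1.
Proof.
move=> k2 nsq.
pose Pd N (pq : nat*nat) := [&& 0 < pq.2, N.+1 < pq.1 + k*pq.2,
   pq.1*pq.1 <= k*(pq.2*pq.2)+2*k, k*(pq.2*pq.2) <= pq.1*pq.1+2*k & pq.1*pq.1 != k*(pq.2*pq.2)].
have D N : exists pq, Pd N pq.
  have [p [q [H1 H2 H3 H4 H5]]] := @dirichlet k N (ltnW k2) nsq.
  by exists (p,q); rewrite /Pd /= H1 H2 H3 H4 H5.
pose h N := xchoose (D N).
have hP N : Pd N (h N) := xchooseP (D N).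
pose meas (pq : nat*nat) := pq.1 + k*pq.2.
pose g := fix g i := if i is i'.+1 then meas (h (g i')) else 0.
pose pr i := h (g i).
have step i : meas (pr i) < meas (pr i.+1).
  have /and5P [_ H _ _ _] := hP (g i.+1).
  by rewrite /pr /=; apply: ltn_trans H.
have mono i j : i < j -> meas (pr i) < meas (pr j).
  elim: j => // j IH; rewrite ltnS leq_eqVlt => /orP [/eqP -> | /IH H]; first exact: step.
  exact: ltn_trans H (step j).
pose T := (bool * 'I_(2*k).+1 * 'I_(2*k).+1 * 'I_(2*k).+1)%type.
pose cls (pq : nat*nat) : T :=
  let sg := pq.1*pq.1 < k*(pq.2*pq.2) in
  let m := if sg then k*(pq.2*pq.2) - pq.1*pq.1 else pq.1*pq.1 - k*(pq.2*pq.2) in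
  (sg, inord m, inord (pq.1 %% m), inord (pq.2 %% m)).
pose F (i : 'I_#|{: T}|.+1) : T := cls (pr i).
have [i [j [ij fij]]] : exists i j : 'I_#|{: T}|.+1, i < j /\ F i = F j.
  case E: [exists i : 'I_#|{: T}|.+1, exists j : 'I_#|{: T}|.+1, (i < j) && (F i == F j)].
    move/existsP: E => [i /existsP [j /andP [H1 /eqP H2]]]; by exists i, j.
  have inj : injective F.
    move=> i j Hf; apply/val_inj/eqP; rewrite /= eqn_leq.
    move/negbT: E => /existsPn E.
    have Ei := E i; have Ej := E j.
    move/existsPn: Ei => /(_ j); move/existsPn: Ej => /(_ i).
    rewrite Hf eqxx !andbT -!leqNgt => -> ->; done.
  by have := leq_card F inj; rewrite card_ord ltnn.
have neq : pr i <> pr j by move=> E; have := mono _ _ ij; rewrite E ltnn.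
move: (hP (g i)) (hP (g j)) fij neq; rewrite /F /cls -/(pr i) -/(pr j).
case: (pr i) => p1 q1; case: (pr j) => p2 q2 /=.
move=> /and5P [P1 _ P3 P4 P5] /and5P [Q1 _ Q3 Q4 Q5].
rewrite /= in P1 P3 P4 P5 Q1 Q3 Q4 Q5.
set m1 := if _ then _ else _; set m2 := if _ then _ else _.
have m1b : m1 <= 2*k by rewrite /m1; case: ltngtP; lia.
have m2b : m2 <= 2*k by rewrite /m2; case: ltngtP; lia.
have m1p : 0 < m1 by rewrite /m1; case: (ltngtP (p1*p1) (k*(q1*q1))) => H; [lia|lia|by rewrite H eqxx in P5].
have m2p : 0 < m2 by rewrite /m2; case: (ltngtP (p2*p2) (k*(q2*q2))) => H; [lia|lia|by rewrite H eqxx in Q5].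
case=> Es Em Ep Eq neq.
have Em' : m1 = m2 by move/(congr1 val): Em; rewrite /= !inordK // ltnS.
rewrite -Em' in Ep Eq.
have bnd x : x %% m1 < (2*k).+1 by rewrite ltnS; apply: leq_trans (ltnW (ltn_pmod x m1p)) m1b.
have Ep' : p1 %% m1 = p2 %% m1 by move/(congr1 val): Ep; rewrite /= !inordK ?bnd.
have Eq' : q1 %% m1 = q2 %% m1 by move/(congr1 val): Eq; rewrite /= !inordK ?bnd.
have dp := divn_eq p2 m1; have dp' := divn_eq p1 m1.
have dq := divn_eq q2 m1; have dq' := divn_eq q1 m1.
have Hd1 : (Z.of_nat (p2*p2)%N - Z.of_nat (k*(q2*q2))%N)%Z = (if (p2*p2 < k*(q2*q2))%N then - Z.of_nat m1 else Z.of_nat m1)%Z.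
  by rewrite Em' /m2; case: ltngtP; lia.
have Hd2 : (Z.of_nat (p1*p1)%N - Z.of_nat (k*(q1*q1))%N)%Z = (if (p2*p2 < k*(q2*q2))%N then - Z.of_nat m1 else Z.of_nat m1)%Z.
  by rewrite -Es /m1; case: ltngtP; lia.
have [x [y [Hy Hxy]]] := @zpell (Z.of_nat k) (Z.of_nat p2) (Z.of_nat q2) (Z.of_nat p1) (Z.of_nat q1)
   (Z.of_nat (p2*p2)%N - Z.of_nat (k*(q2*q2))%N)%Z (Z.of_nat m1)
   (Z.of_nat (p2 %/ m1)%N - Z.of_nat (p1 %/ m1)%N)%Z (Z.of_nat (q2 %/ m1)%N - Z.of_nat (q1 %/ m1)%N)%Z
   ltac:(rewrite Hd1; case: ifP => _; ring)
   ltac:(lia) ltac:(lia) ltac:(rewrite Hd1 -Hd2; lia)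
   ltac:(lia) ltac:(lia) ltac:(lia) ltac:(lia)
   ltac:(case: (Nat.eq_dec p1 p2) => [e|e]; [right; move=> e'; apply: neq; congr pair; lia|left; lia]).
exists (Z.abs_nat x), (Z.abs_nat y); split; lia.
Qed.


Section ZPart2.
Local Open Scope Z_scope.
Lemma zid (k x y : Z) : x*x = k*y*y + 1 ->
  (k*y*(x-y) - 1)*(k*y*(x-y)) = k*((y*(k*y-x))*(y*(k*y-x)+1)).
Proof.
move=> H.
have E : (k*y*(x-y) - 1)*(k*y*(x-y)) - k*((y*(k*y-x))*(y*(k*y-x)+1))
   = k*y*y*(k-1)*(x*x - k*y*y - 1) by ring.
rewrite H in E. lia.
Qed.
End ZPart2.

Lemma tri2 m : m * m.+1 = 2 * tri m.
Proof.
rewrite /tri [2 * _]mulnC divnK // dvdn2 oddM /=.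
by case: (odd m).
Qed.

Lemma mod_pred k c xi : 0 < k -> xi.+1 = c * k -> xi %% k = k.-1.
Proof.
move=> k0; case: c => [|c]; first by rewrite mul0n.
rewrite mulSn => H.
have -> : xi = c * k + k.-1 by lia.
rewrite modnMDl modn_small //; lia.
Qed.

Theorem proposition2 (k : nat) :
  2 <= k -> ~ is_square k ->
  (prime k \/ exists alpha n : nat, prime alpha /\ odd n /\ k = alpha ^ n) ->
  forall r : nat, in_Rk k r <-> (r = 0 \/ r = k.-1).
Proof.
move=> k2 nsq hk r; split.
- case=> t [xi [E Er]].
  have E2 : xi * xi.+1 = k * (t * t.+1) by rewrite !tri2 E mulnCA.
  have kd : k %| xi * xi.+1 by rewrite E2 dvdn_mulr.
  have [alpha [n [pa [n0 Hk]]]] : exists alpha n, prime alpha /\ 0 < n /\ k = alpha ^ n.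
    case: hk => [pk|[alpha [n [pa [on ->]]]]].
      by exists k, 1; rewrite expn1.
    by exists alpha, n; split => //; split => //; case: n on.
  subst k.
  have k0 : 0 < alpha ^ n by rewrite expn_gt0 prime_gt0.
  case Ha: (alpha %| xi).
  + have cop : coprime alpha xi.+1 := coprime_dvdl Ha (coprimenS xi).
    have : alpha ^ n %| xi by rewrite -(Gauss_dvdl xi (coprimeXl n cop)).
    by rewrite /dvdn => /eqP; rewrite Er; left.
  + have cop : coprime alpha xi by rewrite prime_coprime // Ha.
    have : alpha ^ n %| xi.+1 by rewrite -(Gauss_dvdr xi.+1 (coprimeXl n cop)).
    case/dvdnP => c Hc; right; rewrite -Er; exact: mod_pred k0 Hc.
- case=> [->|->].
    by exists 0, 0; split; [rewrite /tri mul0n div0n muln0 | exact: mod0n].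
  have [x [y [y0 Hxy]]] := @pell k k2 nsq.
  have xy : y < x.
    rewrite ltnNge; apply/negP => C.
    have := leq_mul C C.
    have : y * y <= k * (y * y) by rewrite leq_pmull // ltnW.
    lia.
  have kyx : x <= k * y.
    rewrite leqNgt; apply/negP => C.
    have := leq_mul C C.
    have : y * y <= k * (y * y) by rewrite leq_pmull // ltnW.
    have : 2 * (y*y) <= k * (y * y) by rewrite leq_mul2r k2 orbT.
    have : 0 < y * y by rewrite muln_gt0 y0.
    nia.
  have a0 : 0 < y * (x - y) by rewrite muln_gt0 y0 subn_gt0.
  exists (y * (k*y - x)), (k * (y * (x - y))).-1.
  have Hs : ((k * (y * (x - y))).-1).+1 = y * (x - y) * k.
    by rewrite prednK ?muln_gt0 ?a0 ?andbT 1?mulnC //; lia.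
  split; last exact: mod_pred (ltnW k2) Hs.
  apply/eqP; rewrite -(eqn_pmul2l (_ : 0 < 2)) //; apply/eqP.
  rewrite -tri2 [2 * (k * _)]mulnCA -tri2 Hs.
  have HZ := zid (Z.of_nat k) (Z.of_nat x) (Z.of_nat y) ltac:(lia).
  set X := (k * (y * (x - y))).-1.
  have HX : Z.of_nat X = (Z.of_nat k * Z.of_nat y * (Z.of_nat x - Z.of_nat y) - 1)%Z.
    have : X.+1 = y * (x - y) * k by [].
    lia.
  have HT : Z.of_nat (y * (k*y - x))%N = (Z.of_nat y * (Z.of_nat k * Z.of_nat y - Z.of_nat x))%Z.
    by rewrite Nat2Z.inj_mul Nat2Z.inj_sub ?Nat2Z.inj_mul //; apply/leP.
  set T := y * (k*y - x).
  have -> : y * (x - y) * k = X.+1 by [].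
  apply: Nat2Z.inj.
  rewrite !Nat2Z.inj_mul Nat2Z.inj_succ HX Nat2Z.inj_succ HT.
  rewrite Nat2Z.inj_sub; last by apply/leP.
  rewrite Nat2Z.inj_mul /Z.succ.
  move: HZ; rewrite Z.sub_add; lia.
Qed.
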